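(* Let $n,m\ge1$, let $H$ be a group, let $\sigma_{n+m}\colon G_{n+m}\to S_{n+m}$ and $\sigma_n\colon G_n\to S_n$ be surjective homomorphisms with kernels $P_{\sigma_{n+m}}$ and $P_{\sigma_n}$, let $f\colon P_{\sigma_{n+m}}\to P_{\sigma_n}$ be a surjective homomorphism, and let $\psi_m\colon H^{n+m}\to H^n$ be the projection onto the first $n$ factors. For $k\in\{n,n+m\}$ let $PW_k$ be the preimage of $P_{\sigma_k}$ under the projection $H^k\rtimes_{\sigma_k}G_k\to G_k$, identified with the direct product $H^k\times P_{\sigma_k}$. Then the homomorphism $(\psi_m,f)\colon PW_{n+m}\to PW_n$, $(\mathbf h,g)\mapsto(\psi_m(\mathbf h),f(g))$, admits a section (a homomorphism $s$ with $(\psi_m,f)\circ s=\mathrm{id}$) if and only if $f$ admits a section.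
   Context: For a surjective homomorphism $\tau\colon G\to S_k$, $H^k\rtimes_\tau G$ is the semidirect product in which $G$ acts on $H^k$ by permuting coordinates through $\tau$: $g\cdot(h_1,\dots,h_k)=(h_{\tau(g)(1)},\dots,h_{\tau(g)(k)})$ (as a left action). Since $\ker\tau$ acts trivially, the preimage of $\ker\tau$ in $H^k\rtimes_\tau G$ is the internal direct product $H^k\times\ker\tau$. *)

(* Defs.v *)
From mathcomp Require Import all_boot all_fingroup.
Set Implicit Arguments.
Unset Strict Implicit.
Unset Printing Implicit Defensive.

Record absgroup := AbsGroup {
  gcar :> Type;
  gmul : gcar -> gcar -> gcar;
  gone : gcar;
  ginv : gcar -> gcar;
  gmulA : forall x y z, gmul x (gmul y z) = gmul (gmul x y) z;
  gmul1 : forall x, gmul gone x = x;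
  gmulV : forall x, gmul (ginv x) x = gone
}.

Definition is_hom (A B : Type) (mA : A -> A -> A) (mB : B -> B -> B) (f : A -> B) :=
  forall x y, f (mA x y) = mB (f x) (f y).

Definition surj (A B : Type) (f : A -> B) := forall y, exists x, f x = y.

(* homomorphism G -> S_k, S_k = {perm 'I_k} with MathComp group law
   (s * t) x = t (s x). *)
Record shom (G : absgroup) (k : nat) := SHom {
  shfun :> G -> {perm 'I_k};
  shmorph : forall x y, shfun (gmul x y) = (shfun x * shfun y)%g
}.

Section Kernel.
Variables (G : absgroup) (k : nat) (s : shom G k).

Lemma shom1 : s (gone G) = 1%g.
Proof.
have := shmorph s (gone G) (gone G); rewrite gmul1 => E.
by apply: (@mulgI _ (s (gone G))); rewrite -E mulg1.
Qed.

Definition kcar := {g : G | s g == 1%g}.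

Lemma kmul_proof (x y : kcar) : s (gmul (val x) (val y)) == 1%g.
Proof. by rewrite shmorph (eqP (valP x)) (eqP (valP y)) mulg1. Qed.
Definition kmul (x y : kcar) : kcar := exist (fun g : G => s g == 1%g) _ (kmul_proof x y).

Lemma kone_proof : s (gone G) == 1%g. Proof. by rewrite shom1. Qed.
Definition kone : kcar := exist (fun g : G => s g == 1%g) _ kone_proof.

Lemma kinv_proof (x : kcar) : s (ginv (val x)) == 1%g.
Proof.
have := shmorph s (ginv (val x)) (val x).
by rewrite gmulV shom1 (eqP (valP x)) mulg1 => <-.
Qed.
Definition kinv (x : kcar) : kcar := exist (fun g : G => s g == 1%g) _ (kinv_proof x).

Lemma kmulA x y z : kmul x (kmul y z) = kmul (kmul x y) z.
Proof. by apply: val_inj; rewrite /= gmulA. Qed.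
Lemma kmul1 x : kmul kone x = x.
Proof. by apply: val_inj; rewrite /= gmul1. Qed.
Lemma kmulV x : kmul (kinv x) x = kone.
Proof. by apply: val_inj; rewrite /= gmulV. Qed.

Definition kernel : absgroup := AbsGroup kmulA kmul1 kmulV.

End Kernel.

Definition pow_car (H : absgroup) (k : nat) := 'I_k -> H.

Definition psi (H : absgroup) (n m : nat) (h : pow_car H (n + m)) : pow_car H n :=
  fun i => h (lshift m i).

Section Wreath.
Variables (H G : absgroup) (k : nat) (s : shom G k).

Definition act (g : G) (h : pow_car H k) : pow_car H k := fun i => h (s g i).

Definition sdmul (x y : pow_car H k * G) : pow_car H k * G :=
  (fun i => gmul (x.1 i) (act x.2 y.1 i), gmul x.2 y.2).

Definition PW := {x : pow_car H k * G | s x.2 == 1%g}.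

Lemma pwmul_proof (x y : PW) : s (sdmul (val x) (val y)).2 == 1%g.
Proof. by rewrite /= shmorph (eqP (valP x)) (eqP (valP y)) mulg1. Qed.
Definition pwmul (x y : PW) : PW := exist (fun x : pow_car H k * G => s x.2 == 1%g) _ (pwmul_proof x y).

(* identification PW_k = H^k x P_s *)
Definition pw_h (x : PW) : pow_car H k := (val x).1.
Definition pw_g (x : PW) : kernel s := exist (fun g : G => s g == 1%g) (val x).2 (valP x).

End Wreath.

Definition psif (H G1 G2 : absgroup) (n m : nat) (s1 : shom G1 (n + m)) (s2 : shom G2 n)
  (f : kernel s1 -> kernel s2) (x : PW H s1) : PW H s2 :=
  exist (fun y : pow_car H n * G2 => s2 y.2 == 1%g) (psi (pw_h x), val (f (pw_g x))) (valP (f (pw_g x))).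

(* Main.v *)
Require Import Defs.
From mathcomp Require Import all_boot all_fingroup.
From Stdlib Require Import FunctionalExtensionality.

Lemma act_triv (H G : absgroup) (k : nat) (s : shom G k) (g : G) (h : pow_car H k) :
  s g == 1%g -> Defs.act s g h = h.
Proof. by move=> /eqP E; apply: functional_extensionality => i; rewrite /Defs.act E perm1. Qed.

Definition ext {H : absgroup} {n : nat} (m : nat) (h : pow_car H n) : pow_car H (n + m) :=
  fun i => match split i with inl j => h j | inr _ => gone H end.

Lemma ext_psi (H : absgroup) (n m : nat) (h : pow_car H n) : psi (ext m h) = h.
Proof.
apply: functional_extensionality => i.
by rewrite /psi /ext (unsplitK (inl _ i)).
Qed.

Theorem proposition5p21 (n m : nat) (Hn : 1 <= n) (Hm : 1 <= m)
  (H G1 G2 : absgroup) (s1 : shom G1 (n + m)) (s2 : shom G2 n)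
  (s1surj : surj s1) (s2surj : surj s2)
  (f : kernel s1 -> kernel s2)
  (fhom : is_hom (@gmul (kernel s1)) (@gmul (kernel s2)) f)
  (fsurj : surj f) :
  (exists s : PW H s2 -> PW H s1,
     is_hom (@pwmul H G2 n s2) (@pwmul H G1 (n + m) s1) s /\
     forall x, psif f (s x) = x)
  <->
  (exists t : kernel s2 -> kernel s1,
     is_hom (@gmul (kernel s2)) (@gmul (kernel s1)) t /\
     forall x, f (t x) = x).
Proof.
split.
- case=> s [shom sK].
  pose xg (g : kernel s2) : PW H s2 :=
    exist (fun y : pow_car H n * G2 => s2 y.2 == 1%g) (fun _ => gone H, val g) (valP g).
  exists (fun g => pw_g (s (xg g))); split.
  + move=> a b.
    have -> : xg (gmul a b) = pwmul (xg a) (xg b).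
      apply: val_inj => /=; congr pair.
      by apply: functional_extensionality => i; rewrite gmul1.
    by rewrite shom; apply: val_inj.
  + move=> g; apply: val_inj.
    have := f_equal (fun y => (val y).2) (sK (xg g)).
    by rewrite /=.
- case=> t [thom tK].
  pose sx (x : PW H s2) : PW H s1 :=
    exist (fun y : pow_car H (n + m) * G1 => s1 y.2 == 1%g)
      (ext m (pw_h x), val (t (pw_g x))) (valP (t (pw_g x))).
  exists sx; split.
  + move=> a b; apply: val_inj => /=.
    congr pair.
      apply: functional_extensionality => i; rewrite /ext /pw_h /=.
      rewrite !act_triv //; try exact: (valP a); last exact: (valP (t (pw_g a))).
      by case: (split i) => // ?; rewrite gmul1.
    have -> : pw_g (pwmul a b) = gmul (pw_g a) (pw_g b) by apply: val_inj.
    by rewrite /pw_g /= thom.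
  + move=> x; apply: val_inj => /=.
    have -> : pw_g (sx x) = t (pw_g x) by apply: val_inj.
    rewrite tK.
    case: x => [[h g] p] /=; congr pair.
    by rewrite ext_psi.
Qed.
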